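(* Let $M$ be a Baire space, $\mathcal{B}(M)$ its Borel $\sigma$-algebra, $\mathcal{I}_1\subseteq\mathcal{B}(M)$ the $\sigma$-ideal of meagre Borel sets, and $\mathcal{Q}^2(\mathcal{B}(M)):=\{\mathfrak{C}\in\mathcal{Q}(\mathcal{B}(M)):\mathfrak{C}\cap\mathcal{I}_1=\emptyset\}$ with the subspace topology. For $\mathfrak{B}\in\mathcal{Q}(\mathcal{T}(M))$ put $\mathfrak{C}(\mathfrak{B}):=\{A\in\mathcal{B}(M): \exists U\in\mathfrak{B} \text{ with } A\,\triangle\,U\in\mathcal{I}_1\}$. Then $\mathfrak{C}(\mathfrak{B})\in\mathcal{Q}^2(\mathcal{B}(M))$, and $\pi_M:\mathcal{Q}(\mathcal{T}(M))\to\mathcal{Q}^2(\mathcal{B}(M))$, $\mathfrak{B}\mapsto\mathfrak{C}(\mathfrak{B})$, is a homeomorphism.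
   Context: $\mathcal{T}(M)$ is the lattice of open subsets of $M$ (join union, meet intersection). A Baire space is a space in which no nonempty open set is meagre (a countable union of nowhere dense sets). A quasipoint in a lattice $\mathbb{L}$ with least element $0$ is a maximal (w.r.t. inclusion) subset $\mathfrak{B}\subseteq\mathbb{L}$ such that $\mathfrak{B}\neq\emptyset$, $0\notin\mathfrak{B}$, and for all $a,b\in\mathfrak{B}$ there is $c\in\mathfrak{B}$ with $c\le a\wedge b$. $\mathcal{Q}(\mathbb{L})$ denotes the set of quasipoints; for $a\in\mathbb{L}$ put $\mathcal{Q}_a(\mathbb{L})=\{\mathfrak{B}\in\mathcal{Q}(\mathbb{L}) : a\in\mathfrak{B}\}$. The Stone spectrum is $\mathcal{Q}(\mathbb{L})$ with the topology having the sets $\mathcal{Q}_a(\mathbb{L})$ as a basis. *)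

(* Defs.v *)
From HB Require Import structures.
From mathcomp Require Import all_boot all_order.
From mathcomp Require Import all_classical topology measure.

Unset Implicit Arguments.
Unset Strict Implicit.
Unset Printing Implicit Defensive.

Local Open Scope classical_set_scope.

(* Both lattices of the paper used here (the open sets T(M) and the Borel
   sets B(M)) are lattices of subsets of M, ordered by inclusion, with meet
   = intersection and least element = the empty set. *)

Definition lat_filter_base {T : Type} (L B : set (set T)) : Prop :=
  [/\ B `<=` L, B !=set0, ~ B set0 &
      forall a b, B a -> B b -> exists2 c, B c & c `<=` a `&` b].

Definition quasipoint {T : Type} (L B : set (set T)) : Prop :=
  lat_filter_base L B /\
  forall B', lat_filter_base L B' -> B `<=` B' -> B' = B.

Definition quasipoints {T : Type} (L : set (set T)) : set (set (set T)) :=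
  [set B | quasipoint L B].

Definition quasipoints_at {T : Type} (L : set (set T)) (a : set T)
  : set (set (set T)) := [set B | quasipoint L B /\ B a].

Definition stone_open {T : Type} (L : set (set T)) (S : set (set (set T)))
  : Prop :=
  exists2 F : set (set T), F `<=` L & S = \bigcup_(a in F) quasipoints_at L a.

Definition stone_subspace_open {T : Type} (L : set (set T))
  (Y S : set (set (set T))) : Prop :=
  exists2 O, stone_open L O & S = O `&` Y.

Definition nowhere_dense {M : topologicalType} (A : set M) : Prop :=
  interior (closure A) = set0.

Definition meagre {M : topologicalType} (A : set M) : Prop :=
  exists F : nat -> set M,
    (forall n, nowhere_dense (F n)) /\ A = \bigcup_n F n.

Definition baire_space (M : topologicalType) : Prop :=
  forall U : set M, open U -> U !=set0 -> ~ meagre U.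

Definition opens (M : topologicalType) : set (set M) := [set U | open U].

Definition borel (M : topologicalType) : set (set M) := smallest (sigma_algebra setT) (opens M).

Definition meagre_borel (M : topologicalType) : set (set M) :=
  [set A | borel M A /\ meagre A].

Definition Q2 (M : topologicalType) : set (set (set M)) :=
  [set C | quasipoint (borel M) C /\ C `&` meagre_borel M = set0].

Definition symdiff {T : Type} (A B : set T) : set T := (A `\` B) `|` (B `\` A).

Definition frakC (M : topologicalType) (B : set (set M)) : set (set M) :=
  [set A | borel M A /\ exists2 U, B U & meagre_borel M (symdiff A U)].

(* Main.v *)
Require Import Defs.
From HB Require Import structures.
From mathcomp Require Import all_boot all_order.
From mathcomp Require Import all_classical topology measure.

Local Open Scope classical_set_scope.

Section Aux.
Variable M : topologicalType.
Implicit Types A B C D U V W X : set M.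

Lemma symdiffC A B : symdiff A B = symdiff B A.
Proof. by rewrite /symdiff setUC. Qed.

Lemma symdiff_tri A B C : symdiff A C `<=` symdiff A B `|` symdiff B C.
Proof.
move=> x [[Ax nCx]|[Cx nAx]]; have [Bx|nBx] := pselect (B x).
- by right; left.
- by left; left.
- by left; right.
- by right; right.
Qed.

Lemma symdiffI A B C D : symdiff (A `&` B) (C `&` D) `<=` symdiff A C `|` symdiff B D.
Proof.
move=> x [[[Ax Bx] nCD]|[[Cx Dx] nAB]].
- have [Cx|nCx] := pselect (C x); last by left; left.
  by right; left; split => // Dx; apply: nCD.
- have [Ax|nAx] := pselect (A x); last by left; right.
  by right; right; split => // Bx; apply: nAB.
Qed.

Lemma symdiffCC A B : symdiff (~` A) (~` B) = symdiff A B.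
Proof.
apply/seteqP; split => x [[H1 H2]|[H1 H2]].
- by right; split => //; apply: contrapT.
- by left; split => //; apply: contrapT.
- by right; split.
- by left; split.
Qed.

Lemma symdiffxx A : symdiff A A = set0.
Proof. by apply/seteqP; split => x //; case=> -[Ax nAx]; apply: nAx. Qed.

Lemma symdiff0x U : symdiff set0 U = U.
Proof. by apply/seteqP; split => x; rewrite /symdiff; [move=> [[[] _]|[]] | move=> Ux; right; split => // -[]]. Qed.

Lemma nd_sub A B : A `<=` B -> nowhere_dense B -> nowhere_dense A.
Proof.
rewrite /nowhere_dense => AB HB; apply/seteqP; split=> // x Hx.
by rewrite -HB; exact: (interiorS (closureS AB)).
Qed.

Lemma nd0 : nowhere_dense (@set0 M).
Proof. by rewrite /nowhere_dense closure0 interior0. Qed.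

Lemma meagre_sub {A B} : A `<=` B -> meagre B -> meagre A.
Proof.
move=> AB [F [HF eB]]; subst B.
exists (fun n => F n `&` A); split.
  by move=> n; apply: nd_sub (HF n); apply: subIsetl.
apply/seteqP; split => [x Ax|x [n _ [_ Ax]]] //.
by have [n _ Fx] := AB x Ax; exists n.
Qed.

Lemma meagre_bigcup (A : nat -> set M) :
  (forall n, meagre (A n)) -> meagre (\bigcup_n A n).
Proof.
move=> HA; have [F HF] := choice HA.
exists (fun k => match unpickle k with Some (n, m) => F n m | None => set0 end).
split.
  by move=> k; case: (unpickle k) => [[n m]|]; [apply: (HF n).1 | apply: nd0].
apply/seteqP; split => [x [n _ Ax]|x [k _]].
  move: Ax; rewrite (HF n).2 => -[m _ Fx].
  by exists (pickle (n, m)) => //; rewrite pickleK.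
case: (unpickle k) => [[n m]|] // Fx.
by exists n => //; rewrite (HF n).2; exists m.
Qed.

Lemma meagre0 : meagre (@set0 M).
Proof.
exists (fun _ => set0); split; first by move=> _; exact: nd0.
by apply/seteqP; split => x // [].
Qed.

Lemma meagreU A B : meagre A -> meagre B -> meagre (A `|` B).
Proof.
move=> mA mB.
apply: (@meagre_sub _ (\bigcup_n (if n is 0 then A else if n is 1 then B else set0))).
  by move=> x [Ax|Bx]; [exists 0 | exists 1].
apply: meagre_bigcup => -[|[|n]] //; exact: meagre0.
Qed.

Lemma meagre_nd A : nowhere_dense A -> meagre A.
Proof.
move=> nA; exists (fun _ => A); split => //.
by apply/seteqP; split => [x Ax|x [_ _]//]; exists 0.
Qed.

Lemma borel_open U : open U -> borel M U.
Proof. by move=> oU; rewrite /borel; apply: sub_sigma_algebra. Qed.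

Lemma borelC A : borel M A -> borel M (~` A).
Proof. by move=> bA; rewrite -setTD; apply: sigma_algebraCD. Qed.

Lemma borelU A B : borel M A -> borel M B -> borel M (A `|` B).
Proof.
move=> bA bB.
have -> : A `|` B = \bigcup_n (if n is 0 then A else if n is 1 then B else set0).
  apply/seteqP; split => [x [Ax|Bx]|x [[|[|n]] _ //]]; [exists 0|exists 1|left|right] => //.
apply: sigma_algebra_bigcup => -[|[|n]] //; exact: sigma_algebra0.
Qed.

Lemma borelI A B : borel M A -> borel M B -> borel M (A `&` B).
Proof.
move=> bA bB; rewrite -[A `&` B]setCK setCI; apply: borelC; apply: borelU; exact: borelC.
Qed.

Lemma borelT : borel M setT.
Proof. exact: borel_open openT. Qed.

Lemma borel_symdiff A B : borel M A -> borel M B -> borel M (symdiff A B).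
Proof. by move=> bA bB; rewrite /symdiff !setDE; apply: borelU; apply: borelI => //; apply: borelC. Qed.

Definition BP A := exists2 U, open U & meagre (symdiff A U).

Lemma nd_boundary U : open U -> nowhere_dense (~` U `\` (~` U)°).
Proof.
move=> oU; set N := _ `\` _.
have cN : closed N.
  rewrite /N setDE; apply: closedI; first by rewrite closedC.
  by rewrite closedC; exact: open_interior.
rewrite /nowhere_dense -(closure_id N).1 //.
apply/seteqP; split => // x Nx.
have := interior_subset Nx; case => _; apply.
by apply: (interiorS _ Nx) => y [].
Qed.

Lemma borel_BP A : borel M A -> BP A.
Proof.
apply: smallest_sub; last by move=> U oU; exists U => //; rewrite symdiffxx; exact: meagre0.
split.
- by exists set0; [exact: open0 | rewrite symdiffxx; exact: meagre0].
- move=> B [U oU mU]; rewrite setTD; exists (~` U)°; first exact: open_interior.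
  apply: meagre_sub (symdiff_tri _ (~` U) _) _.
  apply: meagreU; first by rewrite symdiffCC.
  apply: (@meagre_sub _ (~` U `\` (~` U)°)); last by apply: meagre_nd; apply: nd_boundary.
  by move=> x [[H1 H2]|[H1 H2]] //; have := interior_subset H1.
- move=> F HF.
  have /choice[U HU] : forall n, exists U, open U /\ meagre (symdiff (F n) U).
    by move=> n; case: (HF n) => U oU mU; exists U.
  exists (\bigcup_n U n); first by apply: bigcup_open => n _; case: (HU n) => /=.
  apply: (@meagre_sub _ (\bigcup_n symdiff (F n) (U n))); last first.
    by apply: meagre_bigcup => n; case: (HU n).
  move=> x [[[n _ Fx] nU]|[[n _ Ux] nF]]; exists n => //.
    by left; split => // Ux; apply: nU; exists n.
  by right; split => // Fx; apply: nF; exists n.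
Qed.

End Aux.

Arguments meagre_sub {M A B}.
Arguments meagreU {M A B}.
Arguments borel_open {M U}.
Arguments borelC {M A}.
Arguments borelU {M A B}.
Arguments borelI {M A B}.
Arguments borel_symdiff {M A B}.
Arguments borel_BP {M A}.
Arguments symdiffI {M} A B C D.
Arguments symdiff_tri {M} A B C.
Arguments symdiffC {M} A B.
Arguments symdiffxx {M} A.
Arguments symdiff0x {M} U.
Arguments symdiffCC {M} A B.
Arguments meagre0 {M}.
Arguments borelT {M}.

Lemma borel0 {M : topologicalType} : borel M set0.
Proof. by rewrite /borel; apply: sigma_algebra0. Qed.

Section QP.
Context {T : Type} (L : set (set T)).
Hypothesis LI : forall a b, L a -> L b -> L (a `&` b).

Lemma qpL {B a} : quasipoint L B -> B a -> L a.
Proof. by case=> -[BL _ _ _] _; apply: BL. Qed.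

Lemma qp_up {B a b} : quasipoint L B -> B b -> L a -> b `<=` a -> B a.
Proof.
case=> -[BL [b0 Bb0] nB0 Bm] Hmax Bb La ba.
have fb : lat_filter_base L (B `|` [set a]).
  split.
  - by move=> x [/BL|->].
  - by exists b; left.
  - case=> [//|a0]; apply: nB0.
    have -> : (@set0 T) = b by apply/seteqP; split => // x /ba; rewrite -a0.
    exact: Bb.
  - move=> x y [Bx|->] [By|->].
    + by have [c Bc cs] := Bm _ _ Bx By; exists c => //; left.
    + have [c Bc cs] := Bm _ _ Bx Bb; exists c; first by left.
      by move=> z /cs [? ?]; split => //; apply: ba.
    + have [c Bc cs] := Bm _ _ Bb By; exists c; first by left.
      by move=> z /cs [? ?]; split => //; apply: ba.
    + by exists b; [left | move=> z bz; split; apply: ba].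
have E := Hmax _ fb (fun x Bx => or_introl Bx).
by rewrite -E; right.
Qed.

Lemma qp_meet {B a b} : quasipoint L B -> B a -> B b -> B (a `&` b).
Proof.
move=> qB Ba Bb; have [[_ _ _ Bm] _] := qB.
have [c Bc cs] := Bm _ _ Ba Bb.
exact: (qp_up qB Bc (LI _ _ (qpL qB Ba) (qpL qB Bb)) cs).
Qed.

Lemma qp_T {B} : quasipoint L B -> L setT -> B setT.
Proof. by move=> qB LT; have [[_ [b0 Bb0] _ _] _] := qB; exact: (qp_up qB Bb0 LT). Qed.

Lemma qp_disj {B a} : quasipoint L B -> L a -> ~ B a ->
  exists2 b, B b & a `&` b = set0.
Proof.
move=> qB La nBa; apply: contrapT => Hn.
have Hne : forall b, B b -> a `&` b !=set0.
  by move=> b Bb; apply/set0P/eqP => e; apply: Hn; exists b.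
case: qB => -[BL [b0 Bb0] nB0 Bm] Hmax.
pose B' := [set c | L c /\ exists2 b, B b & a `&` b `<=` c].
have fb : lat_filter_base L B'.
  split.
  - by move=> c [].
  - by exists (a `&` b0); split; [exact: LI _ _ La (BL _ Bb0) | exists b0].
  - case=> _ [b Bb sub]; have [x ax] := Hne b Bb; exact: sub x ax.
  - move=> c1 c2 [Lc1 [b1 Bb1 s1]] [Lc2 [b2 Bb2 s2]].
    have [b3 Bb3 s3] := Bm _ _ Bb1 Bb2.
    exists (a `&` b3); first by split; [exact: LI _ _ La (BL _ Bb3) | exists b3].
    by move=> z [az /s3 [z1 z2]]; split; [apply: s1 | apply: s2]; split.
have sB : B `<=` B' by move=> b Bb; split; [exact: BL | exists b => //; exact: subIsetr].
have E := Hmax B' fb sB.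
apply: nBa; rewrite -E; split => //; exists b0 => //; exact: subIsetl.
Qed.

End QP.

Arguments qpL {T L B a}.
Arguments qp_up {T L B a b}.
Arguments qp_T {T L B}.
Arguments qp_meet {T L} LI {B a b}.
Arguments qp_disj {T L} LI {B a}.

Section Main.
Variable M : topologicalType.
Hypothesis hB : baire_space M.
Implicit Types A U V W X : set M.

Lemma opensI : forall a b, opens M a -> opens M b -> opens M (a `&` b).
Proof. by move=> a b oa ob; apply: openI. Qed.

Lemma borelI' : forall a b, borel M a -> borel M b -> borel M (a `&` b).
Proof. by move=> a b; apply: borelI. Qed.

Lemma baire_false {c X} : open c -> c !=set0 -> c `<=` X -> meagre X -> False.
Proof. by move=> oc ne cX mX; exact: hB c oc ne (meagre_sub cX mX). Qed.

Lemma qp_ne {L : set (set M)} {B U} : quasipoint L B -> B U -> U !=set0.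
Proof.
case=> -[_ _ nB0 _] _ BU; apply/set0P/eqP => e; apply: nB0; by rewrite -e.
Qed.

Lemma B_sub_C {B U} : quasipoint (opens M) B -> B U -> frakC M B U.
Proof.
move=> qB BU; have oU : open U := qpL qB BU.
split; first exact: borel_open.
by exists U => //; rewrite symdiffxx; split; [exact: borel0 | exact: meagre0].
Qed.

Lemma frakC_Q2 {B} : quasipoint (opens M) B -> Q2 M (frakC M B).
Proof.
move=> qB.
have fb : lat_filter_base (borel M) (frakC M B).
  split.
  - by move=> A [].
  - by exists setT; apply: B_sub_C => //; apply: (qp_T qB); exact: openT.
  - case=> _ [U BU [_ mU]]; rewrite symdiff0x in mU.
    exact: hB U (qpL qB BU) (qp_ne qB BU) mU.
  - move=> A1 A2 [bA1 [U1 BU1 [_ m1]]] [bA2 [U2 BU2 [_ m2]]].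
    exists (A1 `&` A2) => //; split; first exact: borelI.
    exists (U1 `&` U2); first exact: (qp_meet opensI qB).
    split.
      apply: borel_symdiff; first exact: borelI.
      by apply: borel_open; apply: openI; [exact: (qpL qB BU1) | exact: (qpL qB BU2)].
    exact: meagre_sub (symdiffI _ _ _ _) (meagreU m1 m2).
split; [split => // | ].
  move=> C' fb' sub; apply/seteqP; split => [A C'A|]; last exact: sub.
  case: fb' => C'L _ nC'0 C'm; have bA := C'L _ C'A.
  have [V oV mV] := borel_BP bA.
  have [BV|nBV] := pselect (B V).
    split => //; exists V => //; split => //.
    by apply: borel_symdiff => //; exact: borel_open.
  have [U BU eUV] := qp_disj opensI qB oV nBV.
  exfalso.
  have [c C'c cs] := C'm _ _ C'A (sub _ (B_sub_C qB BU)).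
  have bc := C'L _ C'c.
  have mc : meagre c.
    apply: meagre_sub mV => x /cs [Ax Ux]; left; split => // Vx.
    have : (V `&` U) x by []. by rewrite eUV.
  have cc : C' (~` c).
    apply: sub; split; first exact: borelC.
    exists setT; first by apply: (qp_T qB); exact: openT.
    split; first by apply: borel_symdiff; [exact: borelC | exact: borelT].
    apply: meagre_sub mc => x [[nc nT]|[_ nnc]]; first by exfalso; apply: nT.
    exact: contrapT.
  have [d C'd ds] := C'm _ _ C'c cc.
  apply: nC'0.
  have ed : d = set0 by apply/seteqP; split => // x /ds [cx ncx]; apply: ncx.
  by rewrite -ed.
apply/seteqP; split => // A [[bA [U BU [_ mU]]] [_ mA]].
apply: (hB U (qpL qB BU) (qp_ne qB BU)).
apply: meagre_sub (meagreU mA mU) => x Ux.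
have [Ax|nAx] := pselect (A x); [left | right; right; split] => //.
Qed.

Lemma open_in_C {B U} : quasipoint (opens M) B -> open U -> frakC M B U -> B U.
Proof.
move=> qB oU CU; apply: contrapT => nBU.
have [W BW eUW] := qp_disj opensI qB oU nBU.
have [[[_ _ nC0 Cm] _] _] := frakC_Q2 qB.
have [c Cc cs] := Cm _ _ CU (B_sub_C qB BW).
apply: nC0.
have ec : c = set0 by apply/seteqP; split => // x /cs cx; rewrite -eUW.
by rewrite -ec.
Qed.

Lemma Q2_compl {C A} : Q2 M C -> borel M A -> ~ C A -> C (~` A).
Proof.
move=> [qC _] bA nCA.
have [b Cb eb] := qp_disj borelI' qC bA nCA.
apply: (qp_up qC Cb (borelC bA)) => x bx Ax.
have : (A `&` b) x by []. by rewrite eb.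
Qed.

Lemma Q2_approx {C A X} : Q2 M C -> C A -> borel M X -> meagre (symdiff A X) -> C X.
Proof.
move=> Q2C CA bX mAX; apply: contrapT => nX.
have cX := Q2_compl Q2C bX nX.
case: (Q2C) => -[[CL _ _ Cm] _] Cmb.
have [c Cc cs] := Cm _ _ CA cX.
have mc : meagre c by apply: meagre_sub mAX => x /cs [Ax nXx]; left.
have : (C `&` meagre_borel M) c by split => //; split => //; exact: CL.
by rewrite Cmb.
Qed.

Lemma surj {C} : Q2 M C ->
  quasipoint (opens M) (C `&` opens M) /\ frakC M (C `&` opens M) = C.
Proof.
move=> Q2C; have [qC Cmb] := Q2C.
have qB : quasipoint (opens M) (C `&` opens M).
  split.
    split.
    - by move=> U [].
    - by exists setT; split; [exact: (qp_T qC borelT) | exact: openT].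
    - by case=> C0 _; case: qC => -[_ _ nC0 _] _; apply: nC0.
    - move=> a b [Ca oa] [Cb ob]; exists (a `&` b) => //.
      by split; [exact: (qp_meet borelI' qC) | exact: openI].
  move=> B' [B'L _ nB'0 B'm] sub; apply/seteqP; split; last exact: sub.
  move=> V B'V; have oV : open V := B'L _ B'V.
  split => //; apply: contrapT => nCV.
  have cV := Q2_compl Q2C (borel_open oV) nCV.
  have [W oW mW] := borel_BP (borelC (borel_open oV)).
  have CW := Q2_approx Q2C cV (borel_open oW) mW.
  have B'W := sub W (conj CW oW).
  have [c B'c cs] := B'm _ _ B'V B'W.
  have oc : open c := B'L _ B'c.
  have nec : c !=set0 by apply/set0P/eqP => e; apply: nB'0; rewrite -e.
  apply: (baire_false oc nec _ mW) => x /cs [Vx Wx]; right; split => //.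
split => //.
have [[_ Hm] _] := frakC_Q2 qB.
symmetry; apply: Hm; first by case: qC.
move=> A [bA [U [CU oU] [_ mU]]].
by apply: (Q2_approx Q2C CU bA); rewrite symdiffC.
Qed.

End Main.

Theorem proposition3p43 (M : topologicalType) :
  baire_space M ->
  (* C(B) is in Q^2(B(M)) for every quasipoint B of T(M) *)
  (forall B, quasipoints (opens M) B -> Q2 M (frakC M B)) /\
  (* pi_M is a bijection Q(T(M)) -> Q^2(B(M)) *)
  (forall B1 B2, quasipoints (opens M) B1 -> quasipoints (opens M) B2 ->
     frakC M B1 = frakC M B2 -> B1 = B2) /\
  (forall C, Q2 M C -> exists2 B, quasipoints (opens M) B & frakC M B = C) /\
  (* pi_M is continuous (Q^2 with the subspace topology) *)
  (forall S, stone_subspace_open (borel M) (Q2 M) S ->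
     stone_open (opens M) (quasipoints (opens M) `&` (frakC M) @^-1` S)) /\
  (* pi_M is open *)
  (forall S, stone_open (opens M) S ->
     stone_subspace_open (borel M) (Q2 M) ((frakC M) @` S)).
Proof.
move=> hB; split; first by move=> B qB; exact: frakC_Q2.
split.
  move=> B1 B2 q1 q2 E; apply/seteqP; split => U BU.
  - apply: open_in_C => //; first exact: (qpL q1 BU).
    by rewrite -E; exact: B_sub_C.
  - apply: open_in_C => //; first exact: (qpL q2 BU).
    by rewrite E; exact: B_sub_C.
split.
  move=> C Q2C; have [qB E] := surj _ hB Q2C; by exists (C `&` opens M).
split.
  move=> S [O [F FL ->] ->].
  exists [set U | open U /\ exists2 a, F a & meagre_borel M (symdiff a U)].
    by move=> U [].
  apply/seteqP; split.
  - move=> B [qB [[a Fa [_ [ba [U BU mU]]]] _]].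
    exists U; first by split; [exact: (qpL qB BU) | exists a].
    by split.
  - move=> B [U [oU [a Fa mU]] [qB BU]].
    split; first exact: qB.
    split; [|exact (frakC_Q2 _ hB qB)].
    exists a => //; split; first exact (frakC_Q2 _ hB qB).1.
    by split; [exact: FL | exists U].
move=> S [F FL ->].
exists (\bigcup_(a in F) quasipoints_at (borel M) a).
  by exists F => // a Fa; apply: borel_open; exact: FL.
apply/seteqP; split.
- move=> C [B [a Fa [qB Ba]] <-].
  split; last exact: frakC_Q2.
  exists a => //; split; [exact (frakC_Q2 _ hB qB).1 | exact: B_sub_C].
- move=> C [[a Fa [qC Ca]] Q2C].
  have [qB E] := surj _ hB Q2C.
  exists (C `&` opens M); last exact: E.
  by exists a => //; split => //; split => //; exact: FL.
Qed.
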